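(* Let $k\geq 3$ and let $G$ be a diregular $(2,k,+3)$-digraph. Let $u,v$ be distinct vertices with exactly one common out-neighbour $u_2$, and write $N^+(u)=\{u_1,u_2\}$, $N^+(v)=\{v_1,u_2\}$. If $w\in T(v_1)$, then either $w\in\{u\}\cup O(u)$, or $w\in T(u_1)$ with $d(u_1,w)=k-1$, or $w\in T(u_1)$ with $d(u_1,w)\leq d(v_1,w)$.
   Context: A digraph is $k$-geodetic if for every ordered pair of vertices $x,y$ there is at most one directed path from $x$ to $y$ of length at most $k$ (the trivial path counts). A diregular $(2,k,+3)$-digraph is a $k$-geodetic digraph of order $1+2+\dots+2^k+3$ in which every vertex has in- and out-degree $2$. $N^+(x)$ is the set of out-neighbours of $x$. $d(x,y)$ is the directed distance; $T(x)=\{y: d(x,y)\leq k-1\}$; $O(x)=\{y: d(x,y)\geq k+1\}$ is the outlier set of $x$. *)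

(* Defs.v *)
From mathcomp Require Import all_boot.
Set Implicit Arguments. Unset Strict Implicit. Unset Printing Implicit Defensive.

Section Digraph.
Variables (V : finType) (e : rel V).

Definition outN (x : V) : {set V} := [set y | e x y].
Definition inN (x : V) : {set V} := [set y | e y x].

Definition diregular (d : nat) : Prop :=
  forall x : V, #|outN x| = d /\ #|inN x| = d.

(* a directed walk from x to y of length n: sequence p of successive
   vertices after x, with size p = n (the trivial path is p = [::]) *)
Definition is_walk (x y : V) (p : seq V) : bool := path e x p && (last x p == y).

Definition k_geodetic (k : nat) : Prop :=
  forall (x y : V) (p q : seq V),
    is_walk x y p -> size p <= k -> is_walk x y q -> size q <= k -> p = q.

Fixpoint reachn (n : nat) (x y : V) : bool :=
  if n is n'.+1 then [exists z, e x z && reachn n' z y] else x == y.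

(* directed distance: Some n = length of a shortest walk, None = unreachable
   (a shortest walk has length < #|V|) *)
Definition dist (x y : V) : option nat :=
  let m := find (fun n => reachn n x y) (iota 0 #|V|) in
  if m < #|V| then Some m else None.

Definition Tset (k : nat) (x : V) : {set V} :=
  [set y | if dist x y is Some n then n <= k.-1 else false].

(* O(x) = {y : d(x,y) >= k+1} (unreachable vertices have infinite distance) *)
Definition Oset (k : nat) (x : V) : {set V} :=
  [set y | if dist x y is Some n then k.+1 <= n else true].

End Digraph.

(* Main.v *)
Require Import Defs.
From mathcomp Require Import all_boot zify.
Set Implicit Arguments. Unset Strict Implicit.

Lemma reachn_add (V : finType) (e : rel V) m n x z y :
  reachn e m x z -> reachn e n z y -> reachn e (m + n) x y.
Proof.
elim: m x => [|m IH] x /=; first by move/eqP->.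
move=> /existsP [t /andP [ext Ht]] Hz; apply/existsP; exists t.
by rewrite ext (IH _ Ht Hz).
Qed.

Lemma reach1 (V : finType) (e : rel V) x y : e x y -> reachn e 1 x y.
Proof. by move=> H; apply/existsP; exists y; rewrite H /=. Qed.

Lemma reach0 (V : finType) (e : rel V) x : reachn e 0 x x.
Proof. by rewrite /= eqxx. Qed.

Lemma reachn_walk (V : finType) (e : rel V) n x y :
  reachn e n x y -> exists p, size p = n /\ is_walk e x y p.
Proof.
elim: n x => [|n IH] x /=.
  by move/eqP->; exists [::]; rewrite /is_walk /= eqxx.
move=> /existsP [t /andP [ext Ht]]; have [p [Hs Hw]] := IH _ Ht.
exists (t :: p); split; first by rewrite /= Hs.
by move: Hw; rewrite /is_walk /= ext.
Qed.

Lemma geoU (V : finType) (e : rel V) k : k_geodetic e k ->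
  forall n m x y, n <= k -> m <= k -> reachn e n x y -> reachn e m x y -> n = m.
Proof.
move=> Hg n m x y Hn Hm /reachn_walk [p [Hs Hp]] /reachn_walk [q [Hs' Hq]].
subst n m; by rewrite (Hg _ _ _ _ Hp Hn Hq Hm).
Qed.

Lemma geoL1 (V : finType) (e : rel V) k : k_geodetic e k ->
  forall x z1 z2 i j y, e x z1 -> e x z2 -> i < k -> j < k ->
  reachn e i z1 y -> reachn e j z2 y -> z1 = z2.
Proof.
move=> Hg x z1 z2 i j y H1 H2 Hi Hj /reachn_walk [p [Hps Hp]] /reachn_walk [q [Hqs Hq]].
have Hp' : is_walk e x y (z1 :: p) by move: Hp; rewrite /is_walk /= H1.
have Hq' : is_walk e x y (z2 :: q) by move: Hq; rewrite /is_walk /= H2.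
have := Hg _ _ _ _ Hp' _ Hq'. rewrite /= Hps Hqs. by move=> /(_ Hi Hj) [].
Qed.

Definition S (V : finType) (e : rel V) n x : {set V} := [set y | reachn e n x y].
Definition B (V : finType) (e : rel V) j x : {set V} :=
  [set y | [exists i : 'I_j.+1, reachn e i x y]].

Lemma inB (V : finType) (e : rel V) j x y :
  reachn e j x y -> forall j', j <= j' -> y \in B e j' x.
Proof.
move=> H j' Hj; rewrite inE; apply/existsP.
have Hlt : j < j'.+1 by lia.
by exists (Ordinal Hlt).
Qed.

Lemma cardS (V : finType) (e : rel V) k : k_geodetic e k -> diregular e 2 ->
  forall n x, n <= k -> #|S e n x| = 2 ^ n.
Proof.
move=> Hg Hd; elim=> [|n IH] x Hn.
  have -> : S e 0 x = [set x] by apply/setP=> y; rewrite !inE /= eq_sym.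
  by rewrite cards1.
have [_ _ [z1 [z2 [Hne Hz]]]] : [/\ true, true & exists z1 z2, z1 != z2 /\ outN e x = [set z1; z2]].
  by split=> //; apply/cards2P; rewrite (proj1 (Hd x)).
have Hz1 : e x z1 by have := set21 z1 z2; rewrite -Hz inE.
have Hz2 : e x z2 by have := set22 z1 z2; rewrite -Hz inE.
have -> : S e n.+1 x = S e n z1 :|: S e n z2.
  apply/setP=> y; rewrite !inE /=; apply/existsP/orP.
    move=> [t /andP [ext Ht]]; have : t \in outN e x by rewrite inE.
    by rewrite Hz !inE => /orP [] /eqP <-; [left|right].
  by move=> [] H; [exists z1; rewrite Hz1 | exists z2; rewrite Hz2].
rewrite cardsU !IH; try lia.
have -> : S e n z1 :&: S e n z2 = set0.
  apply/setP=> y; rewrite !inE; apply/negP => /andP [H1 H2].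
  have := geoL1 Hg Hz1 Hz2 _ _ H1 H2; have Hnk : n < k by lia.
  by move=> /(_ Hnk Hnk) /eqP; rewrite (negbTE Hne).
by rewrite cards0 expnS; lia.
Qed.

Lemma cardB (V : finType) (e : rel V) k : k_geodetic e k -> diregular e 2 ->
  forall j x, j <= k -> #|B e j x| = \sum_(i < j.+1) 2 ^ i.
Proof.
move=> Hg Hd; elim=> [|j IH] x Hj.
  have -> : B e 0 x = S e 0 x.
    apply/setP=> y; rewrite !inE; apply/existsP/idP; first by move=> [[[|] //]].
    by move=> H; exists ord0.
  by rewrite (cardS Hg Hd) // big_ord_recr big_ord0.
have -> : B e j.+1 x = B e j x :|: S e j.+1 x.
  apply/setP=> y; rewrite !inE; apply/existsP/orP.
    move=> [i Hi]; have := ltn_ord i; rewrite ltnS leq_eqVlt => /orP [/eqP Ei|Ei].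
      by right; rewrite -Ei.
    by left; apply/existsP; exists (Ordinal Ei).
  move=> [/existsP [i Hi]|H].
    have Hlt : i < j.+2 by have := ltn_ord i; lia.
    by exists (Ordinal Hlt).
  by exists ord_max.
rewrite cardsU IH ?(cardS Hg Hd) //; try lia.
have -> : B e j x :&: S e j.+1 x = set0.
  apply/setP=> y; rewrite !inE; apply/negP => /andP [/existsP [i Hi] H2].
  have := geoU Hg _ _ Hi H2; have := ltn_ord i; move=> Hi' E.
  have : (i:nat) = j.+1 by apply: E; lia.
  lia.
by rewrite cards0 [in RHS]big_ord_recr /= subn0.
Qed.

Lemma dist_some (V : finType) (e : rel V) x y n : dist e x y = Some n ->
  reachn e n x y /\ n < #|V|.
Proof.
rewrite /dist; case: ifP => // Hm [<-]; split=> //.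
have Hh : has (fun n => reachn e n x y) (iota 0 #|V|) by rewrite has_find size_iota.
by have := nth_find 0 Hh; rewrite nth_iota.
Qed.

Lemma dist_le (V : finType) (e : rel V) x y n : n < #|V| -> reachn e n x y ->
  exists m, dist e x y = Some m /\ m <= n.
Proof.
move=> Hn Hr.
have Hle : find (fun n => reachn e n x y) (iota 0 #|V|) <= n.
  rewrite leqNgt; apply/negP => H; have := before_find 0 H.
  by rewrite nth_iota // add0n Hr.
exists (find (fun n => reachn e n x y) (iota 0 #|V|)); split=> //.
rewrite /dist ifT //; lia.
Qed.

Lemma dist_exact (V : finType) (e : rel V) k : k_geodetic e k -> k < #|V| ->
  forall x y n, n <= k -> reachn e n x y -> dist e x y = Some n.
Proof.
move=> Hg HN x y n Hn Hr; have [m [Hd Hm]] := dist_le (leq_ltn_trans Hn HN) Hr.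
have [Hr' _] := dist_some Hd.
by rewrite Hd (geoU Hg (leq_trans Hm Hn) Hn Hr' Hr).
Qed.

Lemma TsetE (V : finType) (e : rel V) k : k < #|V| ->
  forall x, Tset e k x = B e k.-1 x.
Proof.
move=> HN x; apply/setP=> y; rewrite !inE.
case Hd: (dist e x y) => [n|].
  have [Hr _] := dist_some Hd.
  apply/idP/existsP.
    move=> Hn; have Hlt : n < k.-1.+1 by lia.
    by exists (Ordinal Hlt).
  move=> [i Hi]; have Hi' := ltn_ord i.
  have HiN : (i:nat) < #|V| by lia.
have [m [Hm Hmi]] := dist_le HiN Hi.
  move: Hm; rewrite Hd => -[->]; lia.
case: existsP => // -[i Hi]; have Hi' := ltn_ord i.
have HiN : (i:nat) < #|V| by lia.
have [m [Hm Hmi]] := dist_le HiN Hi.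
by rewrite Hd in Hm.
Qed.

Lemma OsetE (V : finType) (e : rel V) k : k < #|V| ->
  forall x, Oset e k x = ~: B e k x.
Proof.
move=> HN x; apply/setP=> y; rewrite !inE.
case Hd: (dist e x y) => [n|].
  have [Hr _] := dist_some Hd.
  apply/idP/negP.
    move=> Hn /existsP [i Hi]; have Hi' := ltn_ord i.
    have HiN : (i:nat) < #|V| by lia.
    have [m [Hm Hmi]] := dist_le HiN Hi.
    move: Hm; rewrite Hd => -[E]; lia.
  move=> H; rewrite ltnNge; apply/negP=> Hn; apply: H.
  have Hlt : n < k.+1 by lia.
  by apply/existsP; exists (Ordinal Hlt).
case: existsP => // -[i Hi]; have Hi' := ltn_ord i.
have HiN : (i:nat) < #|V| by lia.
have [m [Hm Hmi]] := dist_le HiN Hi.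
by rewrite Hd in Hm.
Qed.

Lemma L2 (V : finType) (e : rel V) k : 1 <= k -> k_geodetic e k ->
  forall u v u1 u2 v1, (forall z, e u z -> z = u1 \/ z = u2) ->
  e v v1 -> e v u2 -> v1 != u2 ->
  forall y, y \in B e k.-1 v1 -> y != u -> y \in B e k u -> y \in B e k.-1 u1.
Proof.
move=> Hk Hg u v u1 u2 v1 Hu Hv1 Hv2 Hne y.
rewrite inE => /existsP [b Hb] Hyu; rewrite inE => /existsP [n].
have Hb' := ltn_ord b.
case: n => [[|n] Hn] /= Hr.
  by rewrite eq_sym (negbTE Hyu) in Hr.
move: Hr => /existsP [z /andP [ez Hz]].
case: (Hu z ez) => Ez; subst z.
  by apply: (inB Hz); lia.
have Hbk : (b:nat) < k by lia.
have Hnk : n < k by lia.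
by have := geoL1 Hg Hv1 Hv2 Hbk Hnk Hb Hz => /eqP; rewrite (negbTE Hne).
Qed.

Lemma sum_ge (k : nat) : k.+1 <= \sum_(i < k.+1) 2 ^ i.
Proof.
elim: k => [|k IH]; first by rewrite big_ord_recr big_ord0.
rewrite big_ord_recr /=; have : 0 < 2 ^ k.+1 by rewrite expn_gt0.
move=> H; apply: (leq_trans _ (leq_add IH H)); by rewrite addn1.
Qed.

Theorem corollary1 (V : finType) (e : rel V) (k : nat) :
  3 <= k ->
  diregular e 2 ->
  k_geodetic e k ->
  #|V| = (\sum_(i < k.+1) 2 ^ i) + 3 ->
  forall u v u1 u2 v1 : V,
    u != v ->
    outN e u :&: outN e v = [set u2] ->
    outN e u = [set u1; u2] ->
    outN e v = [set v1; u2] ->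
    forall w : V, w \in Tset e k v1 ->
      (w \in u |: Oset e k u)
      \/ (w \in Tset e k u1 /\ dist e u1 w = Some k.-1)
      \/ (w \in Tset e k u1 /\
          exists a b : nat, [/\ dist e u1 w = Some a, dist e v1 w = Some b & a <= b]).
Proof.
move=> Hk Hd Hg HV u v u1 u2 v1 Huv Hi Hu Hv w.
have HN : k < #|V|.
  rewrite HV; apply: (leq_trans (sum_ge k)); exact: leq_addr.
have Hk1 : 1 <= k by lia.
rewrite !(TsetE e HN) !(OsetE e HN).
have eu z : e u z = (z == u1) || (z == u2).
  have : (z \in outN e u) = (z \in [set u1; u2]) by rewrite Hu.
  by rewrite !inE.
have ev z : e v z = (z == v1) || (z == u2).
  have : (z \in outN e v) = (z \in [set v1; u2]) by rewrite Hv.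
  by rewrite !inE.
have Hu12 : u1 != u2.
  apply/negP=> /eqP E; have := proj1 (Hd u); rewrite Hu E setUid cards1 //.
have Hv12 : v1 != u2.
  apply/negP=> /eqP E; have := proj1 (Hd v); rewrite Hv E setUid cards1 //.
have Hu' : forall z, e u z -> z = u1 \/ z = u2.
  by move=> z; rewrite eu => /orP [] /eqP; [left|right].
have Hv' : forall z, e v z -> z = v1 \/ z = u2.
  by move=> z; rewrite ev => /orP [] /eqP; [left|right].
have euu1 : e u u1 by rewrite eu eqxx.
have euu2 : e u u2 by rewrite eu eqxx orbT.
have evv1 : e v v1 by rewrite ev eqxx.
have evu2 : e v u2 by rewrite ev eqxx orbT.
have cardO x : #|x |: ~: B e k x| <= 4.
  rewrite cardsU1; have := cardsC (B e k x); rewrite (cardB Hg Hd) // HV.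
  case: (x \notin _) => /=; lia.
move=> Hw.
case: (boolP (w == u)) => [/eqP->|Hwu]; first by left; rewrite setU11.
case: (boolP (w \in B e k u)) => HwB; last by left; rewrite in_setU in_setC HwB orbT.
right.
have Hw1 := L2 Hk1 Hg Hu' evv1 evu2 Hv12 Hw Hwu HwB.
have Hw1E := Hw1; rewrite inE in Hw1E; move/existsP: Hw1E => [a Ha].
have HwE := Hw; rewrite inE in HwE; move/existsP: HwE => [b Hb].
have Ha' := ltn_ord a; have Hb' := ltn_ord b.
have Hak : (a:nat) <= k by clear -Ha'; lia.
have Hbk : (b:nat) <= k by clear -Hb'; lia.
have Da : dist e u1 w = Some (a:nat) := dist_exact Hg HN Hak Ha.
have Db : dist e v1 w = Some (b:nat) := dist_exact Hg HN Hbk Hb.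
case: (boolP (a == k.-1 :> nat)) => [/eqP Ea|Nea]; first by left; rewrite Da Ea.
case: (leqP a b) => Hab; first by right; split=> //; exists (a:nat), (b:nat).
exfalso.
pose j := k - a.
have Hj2 : 2 <= j by rewrite /j; clear -Ha' Nea; lia.
have Hjk : j <= k by rewrite /j; clear; lia.
pose X := S e j w.
have cX : #|X| = 2 ^ j := cardS Hg Hd w Hjk.
have cX4 : 4 <= #|X| by rewrite cX (_ : 4 = 2 ^ 2) // leq_exp2l.
pose D := B e k.-1 v1 :\: B e k.-1 u1.
have XD : X \subset D.
  apply/subsetP=> y; rewrite inE => Hy.
  have Hu1y : reachn e k u1 y.
    have := reachn_add Ha Hy; rewrite (_ : a + j = k) // /j; clear -Hak; lia.
  have Hv1y : reachn e (b + j) v1 y := reachn_add Hb Hy.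
  rewrite inE; apply/andP; split.
    apply/negP; rewrite inE => /existsP [i Hri]; have Hi' := ltn_ord i.
    have Hik : (i:nat) <= k by clear -Hi'; lia.
    have := geoU Hg Hik (leqnn k) Hri Hu1y; clear -Hi' Hk1; lia.
  apply: (inB Hv1y); rewrite /j; clear -Hab Nea Ha'; lia.
have DO : D \subset u |: ~: B e k u.
  apply/subsetP=> y; rewrite inE => /andP [Hy1 Hy2].
  rewrite in_setU1 in_setC; case: (boolP (y == u)) => //= Hyu.
  apply/negP => HyB; by rewrite (L2 Hk1 Hg Hu' evv1 evu2 Hv12 Hy2 Hyu HyB) in Hy1.
have cD : #|D| <= 4 := leq_trans (subset_leq_card DO) (cardO u).
have XeqD : X = D by apply/eqP; rewrite eqEcard XD /=; clear -cD cX4; lia.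
have v1u1 : v1 \in B e k.-1 u1.
  apply/negPn/negP => Hn.
  have : v1 \in D by rewrite inE Hn (inB (reach0 e v1)).
  rewrite -XeqD inE => Hr.
  have Hr2 := reachn_add Hb Hr.
  have H1 : (b + j) <= k by rewrite /j; clear -Hab Nea Ha'; lia.
  have := geoU Hg H1 (leq0n k) Hr2 (reach0 e v1); clear -Hj2; lia.
pose D' := B e k.-1 u1 :\: B e k.-1 v1.
have cD' : #|D'| = #|D|.
  by rewrite /D /D' !cardsD setIC !(cardB Hg Hd) // leq_pred.
have DO' : D' \subset v |: ~: B e k v.
  apply/subsetP=> y; rewrite inE => /andP [Hy1 Hy2].
  rewrite in_setU1 in_setC; case: (boolP (y == v)) => //= Hyv.
  apply/negP => HyB; by rewrite (L2 Hk1 Hg Hv' euu1 euu2 Hu12 Hy2 Hyv HyB) in Hy1.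
have D'eq : D' = v |: ~: B e k v.
  by apply/eqP; rewrite eqEcard DO' /=; have := cardO v; clear -cD' cX4 XeqD; rewrite cD' -XeqD; lia.
have : v \in D' by rewrite D'eq setU11.
rewrite inE => /andP [_]; rewrite inE => /existsP [c Hc].
move: v1u1; rewrite inE => /existsP [al Hal].
have Hc' := ltn_ord c; have Hal' := ltn_ord al.
have Hcv1 := reachn_add Hc (reach1 evv1).
have H1 : (al:nat) <= k by clear -Hal'; lia.
have H2 : c + 1 <= k by clear -Hc' Hk1; lia.
have E1 := geoU Hg H1 H2 Hal Hcv1.
have Hr := reachn_add (reach1 euu1) (reachn_add Hc (reach1 evu2)).
have H3 : 1 + (c + 1) <= k by clear -E1 Hal'; lia.
have := geoU Hg H3 Hk1 Hr (reach1 euu2); clear; lia.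
Qed.
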